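(* Let $\frac n5\le k<\frac n2$ and $\delta\in(0,1)$. There is a universal constant $C>0$ such that if $n$ is sufficiently large depending only on $\delta$, then $$\sup_{\theta\in\mathbb{R},\ \eta\in\mathbb{R}^n,\ \sigma>0,\ |\mathcal O|\le k}P_{\theta,\eta,\sigma}\left\{\big|\operatorname{median}(X_1,\dots,X_n)-\theta\big|>C\sigma\sqrt{\log\Big(\frac{en}{n-2k}\Big)}\right\}\le\delta .$$
   Context: Huber contamination model (deterministic version): $\{1,\dots,n\}$ is partitioned into a fixed inlier set $\mathcal I$ and a fixed outlier set $\mathcal O$ with $|\mathcal O|\le k$; the $X_j$ are independent with $X_j\sim N(\theta,\sigma^2)$ for $j\in\mathcal I$ and $X_j=\eta_j$ (a point mass at a fixed arbitrary value $\eta_j\in\mathbb{R}$) for $j\in\mathcal O$. $P_{\theta,\eta,\sigma}$ is the resulting joint law. $\operatorname{median}$ denotes the sample median (for even $n$, any point between the two middle order statistics). *)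

(* Defs.v *)
From HB Require Import structures.
From mathcomp Require Import all_boot all_order all_algebra.
From mathcomp Require Import all_classical all_reals all_analysis.
Set Implicit Arguments. Unset Strict Implicit. Unset Printing Implicit Defensive.
Import Order.TTheory GRing.Theory Num.Theory.
Local Open Scope classical_set_scope.
Local Open Scope ring_scope.

Definition order_stat {R : realType} (n : nat) (x : 'I_n -> R) (j : nat) : R :=
  nth 0 (sort <=%R [seq x i | i <- enum 'I_n]) j.

(* m is a sample median: lies between the two middle order statistics
   (for odd n these coincide, with 0-based indices (n-1)/2 = n/2). *)
Definition is_median {R : realType} (n : nat) (x : 'I_n -> R) (m : R) : Prop :=
  order_stat x ((n - 1) %/ 2) <= m <= order_stat x (n %/ 2).

Definition mutually_independent {R : realType} d (T : measurableType d)
  (P : probability T R) (n : nat) (X : 'I_n -> {RV P >-> R}) : Prop :=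
  forall B : 'I_n -> set R, (forall i, measurable (B i)) ->
    P [set w | forall i, B i (X i w)] = (\prod_(i < n) P (X i @^-1` B i))%E.

(* Main.v *)
Require Import Defs.
From HB Require Import structures.
From mathcomp Require Import all_boot all_order all_algebra.
From mathcomp Require Import all_classical all_reals all_analysis.
Import Order.TTheory GRing.Theory Num.Theory.
Local Open Scope classical_set_scope.
Local Open Scope ring_scope.
From mathcomp Require Import lra ring zify measurable_realfun.

Section S.
Variable R : realType.

Lemma sorted_up (s : seq R) (a : R) (j : nat) : sorted <=%R s -> (j < size s)%N ->
  (a < nth 0 s j) = (size s - j <= count (fun y : R => (a < y)%R) s)%N.
Proof.
elim: s j => [//|y s IH] j /= Hs Hj.
have Hall := order_path_min (@le_trans _ R) Hs.
have Hss : sorted <=%R s by apply: path_sorted Hs.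
case: (ltrP a y) => ay.
- have -> : count (fun y0 => a < y0) s = size s.
    apply/eqP; rewrite -all_count; apply/allP => z zs.
    by apply: (lt_le_trans ay); move/allP: Hall => /(_ z zs).
  rewrite add1n leq_subr; case: j Hj => [|j] Hj /=; first by [].
  apply: (lt_le_trans ay); move/allP: Hall; apply; rewrite mem_nth //.
- rewrite add0n; case: j Hj => [|j] Hj /=.
  + rewrite subn0 ltNge ay /=; apply/esym/negbTE; rewrite -ltnNge ltnS count_size //.
  + by rewrite subSS IH.
Qed.

Lemma sorted_down (s : seq R) (b : R) (j : nat) : sorted <=%R s -> (j < size s)%N ->
  (nth 0 s j < b) = (j < count (fun y : R => (y < b)%R) s)%N.
Proof.
elim: s j => [//|y s IH] j /= Hs Hj.
have Hall := order_path_min (@le_trans _ R) Hs.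
have Hss : sorted <=%R s by apply: path_sorted Hs.
case: (ltrP y b) => yb.
- rewrite add1n; case: j Hj => [|j] Hj /=; first by [].
  by rewrite ltnS IH.
- have -> : count (fun y0 => y0 < b) s = 0%N.
    apply/eqP; rewrite -leqn0 leqNgt -has_count; apply/hasPn => z zs.
    by rewrite -leNgt; apply: (le_trans yb); move/allP: Hall => /(_ z zs).
  rewrite ltn0; apply/negbTE; rewrite -leNgt; case: j Hj => [|j] Hj //=.
  apply: (le_trans yb); move/allP: Hall; apply; rewrite mem_nth //.
Qed.

Lemma count_card (n : nat) (x : 'I_n -> R) (p : pred R) :
  count p [seq x i | i <- enum 'I_n] = #|[set i | p (x i)]%SET|.
Proof.
rewrite count_map -(sum1dep_card (fun i => p (x i))) -sum1_count /=.
by rewrite big_enum_cond.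
Qed.

Lemma os_sorted n (x : 'I_n -> R) : sorted <=%R (sort <=%R [seq x i | i <- enum 'I_n]).
Proof. by apply: sort_sorted; exact: le_total. Qed.

Lemma os_size n (x : 'I_n -> R) : size (sort <=%R [seq x i | i <- enum 'I_n]) = n.
Proof. by rewrite size_sort size_map size_enum_ord. Qed.

Lemma os_count n (x : 'I_n -> R) (p : pred R) :
  count p (sort <=%R [seq x i | i <- enum 'I_n]) = #|[set i | p (x i)]%SET|.
Proof.
rewrite -count_card.
have hp : perm_eq (sort <=%R [seq x i | i <- enum 'I_n]) [seq x i | i <- enum 'I_n].
  by rewrite perm_sort.
by move/permP: hp => /(_ p).
Qed.

Lemma os_up n (x : 'I_n -> R) j a : (j < n)%N ->
  (a < order_stat x j) = (n - j <= #|[set i | (a < x i)%R]%SET|)%N.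
Proof.
move=> jn; rewrite /order_stat sorted_up ?os_sorted ?os_size //.
by rewrite (@os_count n x (fun y => a < y)).
Qed.

Lemma os_down n (x : 'I_n -> R) j b : (j < n)%N ->
  (order_stat x j < b) = (j < #|[set i | (x i < b)%R]%SET|)%N.
Proof.
move=> jn; rewrite /order_stat sorted_down ?os_sorted ?os_size //.
by rewrite (@os_count n x (fun y => y < b)).
Qed.

Lemma os_mono n (x : 'I_n -> R) i j : (i <= j)%N -> (j < n)%N ->
  order_stat x i <= order_stat x j.
Proof.
move=> ij jn; rewrite /order_stat; apply: le_sorted_leq_nth; rewrite ?os_sorted //.
- by rewrite inE os_size (leq_ltn_trans ij).
- by rewrite inE os_size.
Qed.

Lemma median_iff n (x : 'I_n -> R) th c : (0 < n)%N ->
  (exists m, is_median x m /\ c < `|m - th|) <->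
  ((n - n %/ 2 <= #|[set i | (th + c < x i)%R]%SET|)%N \/
   (n - n %/ 2 <= #|[set i | (x i < th - c)%R]%SET|)%N).
Proof.
move=> n0.
have h1 : (n %/ 2 < n)%N by lia.
have h2 : ((n - 1) %/ 2 < n)%N by lia.
have h3 : ((n - 1) %/ 2 <= n %/ 2)%N by lia.
have h4 : (n - n %/ 2 = ((n - 1) %/ 2).+1)%N by lia.
split.
- move=> [m [/andP [lo hi] hc]].
  move: hc; rewrite ltr_normr => /orP [hc|hc].
  + left; rewrite -os_up //; apply: lt_le_trans hi; lra.
  + right; rewrite h4 -os_down //; apply: le_lt_trans lo _; lra.
- move=> [hc|hc].
  + rewrite -os_up // in hc; exists (order_stat x (n %/ 2)); split.
    * by rewrite /is_median lexx andbT os_mono.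
    * rewrite ltr_normr; apply/orP; left; lra.
  + rewrite h4 -os_down // in hc; exists (order_stat x ((n - 1) %/ 2)); split.
    * by rewrite /is_median lexx /= os_mono.
    * rewrite ltr_normr; apply/orP; right; lra.
Qed.

Lemma count_inliers n (I A D : {set 'I_n}) K : A \subset D -> (K <= #|A|)%N ->
  (K - #|~: I| <= #|D :&: I|)%N.
Proof.
move=> AD KA.
have h1 := subset_leq_card AD.
have h2 := cardsID I D.
have h3 : (#|D :\: I| <= #|~: I|)%N by apply: subset_leq_card; rewrite finset.setDE; exact: subsetIr.
lia.
Qed.
End S.
Section G.
Variable R : realType.

Lemma measurable_absdev (th t : R) : measurable [set y : R | t < `|y - th|].
Proof.
have mf : measurable_fun setT (fun y : R => `|y - th|).
  apply: (measurableT_comp (@measurable_realfun.normr_measurable R setT)).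
  exact: measurable_realfun.measurable_funB.
suff -> : [set y : R | t < `|y - th|] = setT `&` (fun y : R => `|y - th|) @^-1` `]t, +oo[.
  by apply: mf => //; exact: measurable_itv.
rewrite setTI; apply/seteqP; split => y /=; rewrite in_itv /= andbT //.
Qed.

Lemma pdf_pointwise (th s t x : R) : 0 < s -> 0 <= t -> t < `|x - th| ->
  normal_pdf th s x <= 2 * expR (- (t ^+ 2 / s ^+ 2) / 4) * normal_pdf th (2 * s) x.
Proof.
move=> s0 t0 tx.
have s0' : s != 0 by rewrite gt_eqF.
have s20 : 2 * s != 0 by rewrite mulf_eq0 negb_or s0' andbT.
rewrite !normal_pdfE //= /normal_fun /normal_peak.
have -> : (2 * s) ^+ 2 * pi *+ 2 = 2 ^+ 2 * (s ^+ 2 * pi *+ 2).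
  by rewrite exprMn -!mulrnAr mulrA.
rewrite sqrtrM ?exprn_ge0 // sqrtr_sqr ger0_norm //.
set P := (Num.sqrt (s ^+ 2 * pi *+ 2))^-1.
have -> : (2 * Num.sqrt (s ^+ 2 * pi *+ 2))^-1 = 2^-1 * P by rewrite invfM.
have P0 : 0 <= P by rewrite invr_ge0 sqrtr_ge0.
set u := x - th.
have tu : t ^+ 2 <= u ^+ 2.
  rewrite -[u ^+ 2]real_normK ?num_real //.
  have : t <= `|u| by exact: ltW.
  move: t0; set v := `|u|; move=> t0 tv; nra.
set a := u ^+ 2 / s ^+ 2.
set b := t ^+ 2 / s ^+ 2.
have s2 : 0 < s ^+ 2 by rewrite exprn_gt0.
have ba : b <= a by rewrite /a /b ler_pM2r ?invr_gt0.
have b0 : 0 <= b by rewrite /b divr_ge0 ?exprn_ge0 // ltW.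
have -> : - u ^+ 2 / (s ^+ 2 *+ 2) = - a / 2.
  by rewrite /a -mulr_natr; field; rewrite gt_eqF.
have -> : - u ^+ 2 / ((2 * s) ^+ 2 *+ 2) = - a / 8.
  rewrite /a -mulr_natr exprMn; field; rewrite gt_eqF //.
have -> : 2 * expR (- b / 4) * ((2 ^-1 * P) * expR (- a / 8)) = P * expR (- b / 4 + - a / 8).
  rewrite expRD; clearbody P; move: (expR (- b / 4)) (expR (- a / 8)) => E1 E2.
  by field.
apply: ler_wpM2l => //; rewrite ler_expR; lra.
Qed.


Lemma normal_tail (th s t : R) : 0 < s -> 0 <= t ->
  (normal_prob th s [set y : R | (t < `|y - th|)%R] <= (2 * expR (- (t ^+ 2 / s ^+ 2) / 4))%:E)%E.
Proof.
move=> s0 t0.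
set c := 2 * expR (- (t ^+ 2 / s ^+ 2) / 4).
have c0 : 0 <= c by rewrite /c mulr_ge0 // expR_ge0.
have mV := measurable_absdev th t.
have mpdf : forall m v : R, measurable_fun [set: R] (fun x : R => (normal_pdf m v x)%:E).
  by move=> m v; apply/measurable_EFinP; exact: measurable_normal_pdf.
rewrite /normal_prob.
apply: (@le_trans _ _ (\int[lebesgue_measure]_(x in [set y : R | (t < `|y - th|)%R]) (c%:E * (normal_pdf th (2 * s) x)%:E))%E).
  apply: ge0_le_integral => //.
  - by move=> x _; rewrite lee_fin normal_pdf_ge0.
  - exact: measurable_funS (mpdf _ _).
  - apply: emeasurable_funM; first exact: measurable_cst.
    exact: measurable_funS (mpdf _ _).
  - by move=> x /= tx; rewrite -EFinM lee_fin pdf_pointwise.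
apply: (@le_trans _ _ (\int[lebesgue_measure]_(x in setT) (c%:E * (normal_pdf th (2 * s) x)%:E))%E).
  apply: ge0_subset_integral => //.
  - apply: emeasurable_funM; first exact: measurable_cst.
    exact: mpdf.
  - by move=> x _; rewrite mule_ge0 // lee_fin normal_pdf_ge0.
rewrite ge0_integralZl_EFin //.
- by rewrite integral_normal_pdf mule1.
- by move=> x _; rewrite lee_fin normal_pdf_ge0.
- exact: mpdf.
Qed.
End G.
Section E.
Local Open Scope ereal_scope.

Lemma meas_count d (T : measurableType d) n (Q : 'I_n -> T -> bool) p :
  (forall i, measurable [set w | Q i w]) ->
  measurable [set w | (p <= #|[set i | Q i w]%SET|)%N].
Proof.
move=> mQ.
have -> : [set w | (p <= #|[set i | Q i w]%SET|)%N] =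
  \bigcup_(S in [set S : {set 'I_n} | (p <= #|S|)%N])
     \bigcap_(i in [set i | i \in S]) [set w | Q i w].
  apply/seteqP; split => w /=.
  - move=> hp; exists [set i | Q i w]%SET => //= i /=; rewrite inE; exact.
  - move=> [S /= hS hw]; apply: leq_trans hS _; apply: subset_leq_card.
    by apply/fintype.subsetP => i iS; rewrite inE; exact: hw i iS.
apply: fin_bigcup_measurable; first exact: finite_finset.
move=> S _; apply: fin_bigcap_measurable; first exact: finite_finset.
by move=> i _; exact: mQ.
Qed.

Lemma union_bound d (T : measurableType d) (R : realType) (mu : probability T R)
  (I : Type) (r : seq I) (p : pred I) (F : I -> set T) :
  (forall i, measurable (F i)) ->
  mu (\big[setU/set0]_(i <- r | p i) F i) <= \sum_(i <- r | p i) mu (F i).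
Proof.
move=> mF; elim: r => [|i r IH]; first by rewrite !big_nil measure0.
rewrite !big_cons; case: (p i) => //.
apply: le_trans (measureU2 _ _ _) _ => //.
  exact: bigsetU_measurable.
exact: leeD.
Qed.

Lemma prod_le (R : realType) (I : Type) (r : seq I) (p : pred I) (f g : I -> \bar R) :
  (forall i, p i -> 0 <= f i <= g i) ->
  \prod_(i <- r | p i) f i <= \prod_(i <- r | p i) g i.
Proof.
move=> hfg.
suff : 0 <= \prod_(i <- r | p i) f i <= \prod_(i <- r | p i) g i by case/andP.
elim/big_rec2: _ => [|i y1 y2 pi /andP [y10 y12]]; first by rewrite lee01 lexx.
have /andP [fi0 fig] := hfg i pi.
by rewrite mule_ge0 //= lee_pmul.
Qed.
End E.
Section N.
Variable R : realType.

Lemma ffact_le (n m : nat) : (n ^_ m <= n ^ m)%N.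
Proof.
elim: m => [|m IH]; first by rewrite ffactn0 expn0.
by rewrite ffactnSr expnS mulnC; apply: leq_mul => //; exact: leq_subr.
Qed.

Lemma e_ge2 : (2 : R) <= expR 1.
Proof. by have := @expR_ge1Dx R 1; lra. Qed.

Lemma mpow_fact (m : nat) : (m%:R : R) ^+ m <= expR 1 ^+ m * m`!%:R.
Proof.
have e2 := e_ge2.
elim: m => [|m IH]; first by rewrite !expr0 mul1r fact0.
have key : (m.+1%:R : R) ^+ m <= expR 1 * (m%:R) ^+ m.
  case: m IH => [|m] _; first by rewrite !expr0 mulr1; lra.
  set M : R := m.+1%:R.
  have M0 : 0 < M by rewrite /M ltr0n.
  have -> : (m.+2%:R : R) = M * (1 + M^-1).
    by rewrite /M -addn1 natrD; field; rewrite gt_eqF.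
  rewrite exprMn mulrC; apply: ler_wpM2r; first by rewrite exprn_ge0 // ltW.
  apply: le_trans (_ : expR (M^-1) ^+ m.+1 <= _).
    apply: lerXn2r; rewrite ?nnegrE ?expR_ge0 //; last exact: expR_ge1Dx.
    by rewrite addr_ge0 // invr_ge0 ltW.
  by rewrite -expRM_natl -/M divff // gt_eqF.
rewrite factS natrM exprS.
rewrite [expR 1 ^+ m.+1]exprS.
apply: le_trans (_ : m.+1%:R * (expR 1 * m%:R ^+ m) <= _).
  by apply: ler_wpM2l => //; rewrite ler0n.
rewrite mulrA (mulrC _ (expR 1)) -!mulrA; apply: ler_wpM2l; first exact: expR_ge0.
rewrite mulrCA; apply: ler_wpM2l; first by rewrite ler0n.
exact: IH.
Qed.

Lemma binom_real (n m : nat) :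
  ('C(n, m)%:R : R) * (m%:R) ^+ m <= (expR 1 * n%:R) ^+ m.
Proof.
apply: le_trans (_ : 'C(n, m)%:R * (expR 1 ^+ m * m`!%:R) <= _).
  by apply: ler_wpM2l; [rewrite ler0n | exact: mpow_fact].
rewrite mulrCA exprMn; apply: ler_wpM2l; first by rewrite exprn_ge0 // expR_ge0.
rewrite -natrM -natrX ler_nat bin_ffact; exact: ffact_le.
Qed.

Lemma N1 (n m : nat) (y : R) : (0 < m)%N -> (0 < n)%N -> 0 <= y ->
  expR 1 * n%:R * y <= 2 * m%:R -> expR 1 * n%:R * y <= n%:R ->
  exists z, [/\ 0 <= z, z <= 2^-1, z <= m%:R / n%:R &
     'C(n, m)%:R * (2 * y ^+ 16) ^+ m <= z ^+ m].
Proof.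
move=> m0 n0 y0 h1 h2.
have e2 := @e_ge2.
set E := expR 1 in h1 h2 e2 *.
set M : R := m%:R. set N : R := n%:R.
have M0 : 0 < M by rewrite /M ltr0n.
have N0 : 0 < N by rewrite /N ltr0n.
have Ny : 0 <= N * y by rewrite mulr_ge0 // ltW.
have h3 : 2 * (N * y) <= E * N * y.
  rewrite -mulrA; apply: ler_wpM2r => //.
have yh : y <= 2^-1.
  have : N * (2 * y) <= N * 1 by rewrite mulr1 mulrCA; lra.
  rewrite ler_pM2l // => h; lra.
have ymn : y <= M / N.
  rewrite ler_pdivlMr //; lra.
set w := y ^+ 14.
have w0 : 0 <= w by rewrite exprn_ge0.
have w4 : w <= 4^-1.
  apply: le_trans (_ : (2^-1 : R) ^+ 14 <= _).
    by apply: lerXn2r; rewrite ?nnegrE // invr_ge0.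
  apply: le_trans (_ : (2^-1 : R) ^+ 2 <= _).
    by apply: ler_wiXn2l; rewrite ?invr_ge0 ?invf_le1 //; lra.
  by rewrite expr2 -invfM; lra.
set z := 2 * E * N * y ^+ 16 / M.
have y16 : y ^+ 16 = y * y * w by rewrite /w -mulrA -exprS -exprS.
have zy : z <= y.
  rewrite /z ler_pdivrMr // y16.
  have yw : 0 <= y * w by rewrite mulr_ge0.
  have -> : 2 * E * N * (y * y * w) = 2 * (E * N * y) * (y * w) by ring.
  apply: le_trans (_ : 2 * (2 * M) * (y * w) <= _).
    by apply: ler_wpM2r => //; lra.
  have : M * (y * w) <= M * (y * 4^-1) by apply: ler_wpM2l; [lra | apply: ler_wpM2l].
  lra.
exists z; split.
- rewrite /z; apply: divr_ge0; last exact: ltW.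
  apply: mulr_ge0; last exact: exprn_ge0.
  apply: mulr_ge0; last exact: ltW.
  lra.
- exact: le_trans zy yh.
- exact: le_trans zy ymn.
have CB := binom_real n m.
rewrite -/E -/M -/N in CB.
have Mm : 0 < M ^+ m by rewrite exprn_gt0.
have -> : z = (E * N / M) * (2 * y ^+ 16) by rewrite /z; field; rewrite gt_eqF.
rewrite [X in _ <= X]exprMn; apply: ler_wpM2r; first by rewrite exprn_ge0 // mulr_ge0 // exprn_ge0.
rewrite expr_div_n ler_pdivlMr //.
Qed.

Lemma N2 (delta : R) : 0 < delta -> exists N0 : nat, forall (n m : nat) (z : R),
  (N0 <= n)%N -> (0 < m)%N -> 0 <= z -> z <= 2^-1 -> z <= m%:R / n%:R -> z ^+ m <= delta.
Proof.
move=> d0.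
set M0 := (Num.truncn (delta^-1)).+1.
have hM : delta^-1 < M0%:R by exact: truncnS_gt.
have M0p : (0 < M0)%N by [].
have M0r : (0 : R) < M0%:R by rewrite ltr0n.
have invM : (M0%:R : R)^-1 < delta.
  by rewrite -[delta]invrK ltf_pV2 ?posrE ?invr_gt0.
exists (M0 * M0)%N => n m z hn m0 z0 z2 zm.
case: (leqP M0 m) => hm.
- apply: le_trans (_ : (2^-1 : R) ^+ m <= _).
    by apply: lerXn2r; rewrite ?nnegrE // invr_ge0.
  apply: ltW; apply: le_lt_trans invM.
  rewrite exprVn lef_pV2 ?posrE ?exprn_gt0 ?ltr0n //.
  rewrite -natrX ler_nat; apply: leq_trans hm _; apply: ltnW; exact: ltn_expl.
- case: m m0 hm zm => [//|m'] _ hm zm.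
  apply: le_trans (_ : z <= _).
    rewrite exprS; rewrite -[X in _ <= X]mulr1; apply: ler_wpM2l => //.
    by apply: exprn_ile1 => //; lra.
  apply: le_trans zm _; apply: ltW; apply: le_lt_trans invM.
  have n0 : (0 : R) < n%:R by rewrite ltr0n; apply: leq_trans hn; rewrite muln_gt0 M0p.
  have hn' : (M0%:R * M0%:R : R) <= n%:R by rewrite -natrM ler_nat.
  have hm' : (m'.+1%:R : R) <= M0%:R by rewrite ler_nat ltnW.
  rewrite ler_pdivrMr //; apply: le_trans hm' _.
  apply: le_trans (_ : M0%:R^-1 * (M0%:R * M0%:R) <= _).
    by rewrite mulrA mulVf ?mul1r // gt_eqF.
  by apply: ler_wpM2l => //; rewrite invr_ge0 ltW.
Qed.
End N.

Theorem mainTheorem19 (R : realType) :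
  exists C : R, 0 < C /\
  forall delta : R, 0 < delta < 1 ->
  exists N : nat, forall n k : nat, (N <= n)%N ->
    (n <= 5 * k)%N -> (2 * k < n)%N ->
  forall (d : measure_display) (T : measurableType d) (P : probability T R)
         (X : 'I_n -> {RV P >-> R})
         (theta : R) (eta : 'I_n -> R) (sigma : R) (I : {set 'I_n}),
    0 < sigma ->
    (#|~: I| <= k)%N ->
    mutually_independent X ->
    (forall i, i \in I -> forall B, measurable B ->
        distribution P (X i) B = normal_prob theta sigma B) ->
    (forall i, i \notin I -> forall B, measurable B ->
        distribution P (X i) B = \d_(eta i) B) ->
    (P [set w | exists m, is_median (fun i => X i w) m /\
          (C * sigma * Num.sqrt (ln (expR 1 * n%:R / (n%:R - 2 * k%:R)))
            < `|m - theta|)%R ] <= delta%:E)%E.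
Proof.
exists 8; split; first lra.
move=> delta /andP [d0 d1].
have [N0 HN0] := @N2 R delta d0.
exists N0 => n k hN hk5 hk2 d T P X th eta sigma I s0 hI indep hin hout.
set r := (n - 2 * k)%N.
have hr : (0 < r)%N by rewrite /r; lia.
have hrn : (r <= n)%N by rewrite /r; lia.
set K := (n - n %/ 2)%N.
set m := (K - k)%N.
have hm : (0 < m)%N by rewrite /m /K; lia.
have hrm : (r <= 2 * m)%N by rewrite /r /m /K; lia.
have hmn : (m <= n)%N by rewrite /m /K; lia.
have n0 : (0 < n)%N by lia.
have nR : (n%:R - 2 * k%:R : R) = r%:R.
  by rewrite /r natrB ?natrM //; lia.
have e2 := @e_ge2 R.
have nr0 : (0 : R) < n%:R by rewrite ltr0n.
have rr0 : (0 : R) < r%:R by rewrite ltr0n.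
set L := ln (expR 1 * n%:R / (n%:R - 2 * k%:R)).
set y : R := r%:R / (expR 1 * n%:R).
have eL : expR (- L) = y.
  rewrite expRN /L lnK; last first.
    by rewrite posrE nR divr_gt0 // mulr_gt0 //; lra.
  by rewrite nR /y invf_div.
have L0 : 0 <= L.
  rewrite /L nR; apply: ln_ge0; rewrite ler_pdivlMr // mul1r.
  have : (r%:R : R) <= n%:R by rewrite ler_nat.
  nra.
set c := 8 * sigma * Num.sqrt L.
have c0 : 0 <= c by rewrite /c mulr_ge0 ?sqrtr_ge0 // mulr_ge0 // ltW.
set q := 2 * expR (- (c ^+ 2 / sigma ^+ 2) / 4).
have hq : q = 2 * y ^+ 16.
  rewrite /q -eL -expRM_natl; congr (_ * expR _).
  rewrite /c !exprMn sqr_sqrtr //; field; rewrite gt_eqF //.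
rewrite -/L -/c.
set A := (X in P X).
have mgt : forall i a, measurable [set w | (a < X i w)%R].
  move=> i a; have -> : [set w | (a < X i w)%R] = X i @^-1` `]a, +oo[.
    by apply/seteqP; split => w /=; rewrite in_itv /= andbT.
  by apply: measurable_funPTI; exact: measurable_itv.
have mlt : forall i b, measurable [set w | (X i w < b)%R].
  move=> i b; have -> : [set w | (X i w < b)%R] = X i @^-1` `]-oo, b[.
    by apply/seteqP; split => w /=; rewrite in_itv /=.
  by apply: measurable_funPTI; exact: measurable_itv.
have mdev : forall i, measurable [set w | (c < `|X i w - th|)%R].
  move=> i; have -> : [set w | (c < `|X i w - th|)%R] =
      X i @^-1` [set y : R | (c < `|y - th|)%R] by [].
  by apply: measurable_funPTI; exact: measurable_absdev.
have AE : A = [set w | (K <= #|[set i | (th + c < X i w)%R]%SET|)%N] `|`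
              [set w | (K <= #|[set i | (X i w < th - c)%R]%SET|)%N].
  apply/seteqP; split => w /=.
  - by move/(@median_iff R n (fun i => X i w) th c n0).
  - by move/(@median_iff R n (fun i => X i w) th c n0).
have mA : measurable A.
  rewrite AE; apply: measurableU; apply: meas_count => i.
  - exact: mgt.
  - exact: mlt.
set G := [set w | (m <= #|[set i | (c < `|X i w - th|)%R && (i \in I)]%SET|)%N].
have mG : measurable G.
  apply: meas_count => i; case: (boolP (i \in I)) => hi.
  - have -> : [set w | (c < `|X i w - th|)%R && true] = [set w | (c < `|X i w - th|)%R].
      by apply/seteqP; split => w /=; rewrite andbT.
    exact: mdev.
  - have -> : [set w | (c < `|X i w - th|)%R && false] = set0.
      by apply/seteqP; split => w /=; rewrite andbF.
    exact: measurable0.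
have AG : A `<=` G.
  move=> w; rewrite AE /G /= => hw.
  set D := [set i | (c < `|X i w - th|)%R]%SET.
  have hDI : [set i | (c < `|X i w - th|)%R && (i \in I)]%SET = D :&: I.
    by apply/setP => i; rewrite !inE.
  rewrite hDI.
  suff : (K - #|~: I| <= #|D :&: I|)%N.
    move=> hh; rewrite /m; apply: leq_trans hh; exact: leq_sub2l.
  case: hw => hw.
  - apply: (count_inliers _ _ _ _ _ _ hw); apply/fintype.subsetP => i; rewrite !inE => hi.
    rewrite ltr_normr; apply/orP; left; lra.
  - apply: (count_inliers _ _ _ _ _ _ hw); apply/fintype.subsetP => i; rewrite !inE => hi.
    rewrite ltr_normr; apply/orP; right; lra.
have PAG : (P A <= P G)%E by apply: le_measure; rewrite ?inE.
apply: le_trans PAG _.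
set FS := [set S : {set 'I_n} | (S \subset I) && (#|S| == m)]%SET.
set F := fun S : {set 'I_n} =>
  \bigcap_(i in [set i | i \in S]) [set w | (c < `|X i w - th|)%R].
have mF : forall S, measurable (F S).
  move=> S; apply: fin_bigcap_measurable; first exact: finite_finset.
  by move=> i _; exact: mdev.
have GU : G `<=` \big[setU/set0]_(S in FS) F S.
  move=> w /= hw.
  move/card_geqP: hw => [s [us ss subs]].
  set S := [set i in s]%SET.
  have SFS : S \in FS.
    rewrite inE; apply/andP; split.
    - apply/fintype.subsetP => i; rewrite inE => /subs; rewrite inE => /andP [] //.
    - by rewrite cardsE (card_uniqP us) ss.
  rewrite (bigD1 S) //=; left => i /=; rewrite inE => /subs; rewrite inE => /andP [] //.
have PGU : (P G <= P (\big[setU/set0]_(S in FS) F S))%E.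
  by apply: le_measure; rewrite ?inE //; apply: bigsetU_measurable => S _; exact: mF.
apply: le_trans PGU _.
apply: le_trans (union_bound _ _ _ P _ _ _ F mF) _.
have PF : forall S, S \in FS -> (P (F S) <= (q ^+ m)%:E)%E.
  move=> S; rewrite inE => /andP [SI /eqP Sm].
  set B := fun i => if i \in S then [set y : R | (c < `|y - th|)%R] else setT.
  have FB : F S = [set w | forall i, B i (X i w)].
    apply/seteqP; split => w /= h i; rewrite /B.
    - by case: ifP => hi //; apply: h.
    - by move=> /= iS; have := h i; rewrite /B iS.
  rewrite FB indep; last first.
    by move=> i; rewrite /B; case: ifP => _; [exact: measurable_absdev | exact: measurableT].
  apply: le_trans (@prod_le R _ _ _ _ (fun i => (if i \in S then q else 1)%:E) _) _.
    move=> i _; apply/andP; split; first exact: measure_ge0.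
    rewrite /B; case: ifP => hi.
    + have iI : i \in I by exact: (fintype.subsetP SI).
      have -> : P (X i @^-1` [set y : R | (c < `|y - th|)%R]) =
          distribution P (X i) [set y : R | (c < `|y - th|)%R] by [].
      rewrite (hin i iI _ (@measurable_absdev R th c)).
      exact: normal_tail.
    + by rewrite preimage_setT probability_setT.
  rewrite prodEFin lee_fin -big_mkcond /= prodr_const.
  by rewrite Sm.
apply: le_trans (_ : (\sum_(S in FS) (q ^+ m)%:E <= _)%E).
  by apply: lee_sum => S hS; exact: PF.
rewrite sumEFin lee_fin sumr_const cards_draws -mulr_natl.
have q0 : 0 <= q by rewrite /q mulr_ge0 // expR_ge0.
apply: le_trans (_ : 'C(n, m)%:R * q ^+ m <= _).
  apply: ler_wpM2r; first exact: exprn_ge0.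
  rewrite ler_nat; apply: leq_bin2l.
  by have := max_card I; rewrite card_ord.
have y0 : 0 <= y by rewrite /y divr_ge0 // ?ler0n // mulr_ge0 ?ler0n //; lra.
have eny : expR 1 * n%:R * y = r%:R.
  by rewrite /y mulrC divfK // mulf_neq0 // gt_eqF //; lra.
have [z [z0 z2 zm Cz]] := @N1 R n m y hm n0 y0
   ltac:(by rewrite eny -natrM ler_nat) ltac:(by rewrite eny ler_nat).
rewrite hq; apply: le_trans Cz _.
exact: (HN0 n m z hN hm z0 z2 zm).
Qed.
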